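(* Let $n,k$ be integers with $8\le 2k\le n-2$ and let $\lambda\in\overline{\mathcal{U}}_{T_{n,n-2k+1}}$. Then the Young diagram $\mathrm{KN}(S_\lambda)$ has exactly $2n-4+2k$ cells; consequently the sum of the hook lengths of the cells on its main diagonal is $2n-4+2k$.
   Context: A partition of $N$ into distinct parts is a sequence $\lambda=(\lambda_1<\dots<\lambda_t)$ of positive integers with sum $N$ and $t\ge 2$, identified with its set of parts. Missing parts: $\mathcal{M}_\lambda=\{1,\dots,\lambda_t\}\setminus\lambda$. $\lambda$ is refinable if two distinct missing parts sum to a part of $\lambda$, unrefinable otherwise; $\mathcal{U}_N$ is the set of unrefinable partitions of $N$. An element of $\mathcal{U}_N$ is maximal if its largest part is the maximum of the largest parts of elements of $\mathcal{U}_N$; $\widetilde{\mathcal{U}}_N$ is the set of these and $\overline{\mathcal{U}}_N=\{\lambda\in\widetilde{\mathcal{U}}_N:\#\mathcal{M}_\lambda=\lfloor\lambda_t/2\rfloor\}$. $T_n=n(n+1)/2$, $T_{n,d}=T_n-d$. $S_\lambda=\mathbb{N}_0\setminus\lambda$. The Keith–Nath transformation sends a set $S\subseteq\mathbb{N}_0$ with $0\in S$ and finite complement to the Young diagram $\mathrm{KN}(S)$ whose boundary is the lattice path that, starting at the origin, takes for $j=0,1,\dots,\max(\mathbb{N}_0\setminus S)$ an east step if $j\in S$ and a north step otherwise. Hook length of a cell = (cells to its right in its row) + (cells below it in its column) + 1; the main diagonal consists of the cells in row $i$, column $i$. *)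

(* Defs.v *)
From mathcomp Require Import all_boot.
Set Implicit Arguments. Unset Strict Implicit. Unset Printing Implicit Defensive.

Definition distinct_partition (N : nat) (l : seq nat) : bool :=
  [&& sorted ltn l, all (fun x => 0 < x) l, sumn l == N & 1 < size l].

Definition largest (l : seq nat) : nat := \max_(x <- l) x.

Definition missing (l : seq nat) : seq nat :=
  [seq m <- iota 1 (largest l) | m \notin l].

Definition refinable (l : seq nat) : bool :=
  has (fun a => has (fun b => (a != b) && (a + b \in l)) (missing l)) (missing l).

Definition unrefinable (N : nat) (l : seq nat) : bool :=
  distinct_partition N l && ~~ refinable l.

Definition maximal_unrefinable (N : nat) (l : seq nat) : Prop :=
  unrefinable N l /\ (forall mu, unrefinable N mu -> largest mu <= largest l).

Definition Ubar (N : nat) (l : seq nat) : Prop :=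
  maximal_unrefinable N l /\ size (missing l) = (largest l)./2.

Definition T (n : nat) : nat := (n * n.+1)./2.
Definition Td (n d : nat) : nat := T n - d.

(* Keith--Nath path of S (a boolean predicate on N_0) up to m = max(N_0 \ S):
   step j (j = 0..m) is north (true) iff j \notin S, east (false) otherwise. *)
Definition KN_path (S : pred nat) (m : nat) : seq bool :=
  [seq ~~ S j | j <- iota 0 m.+1].

(* Young diagram (row lengths, top row first) whose boundary is the path:
   the row of a north step has as many cells as there are east steps before it. *)
Definition path_rows (p : seq bool) : seq nat :=
  rev [seq count negb (take i p) | i <- iota 0 (size p) & nth false p i].

Definition KN (S : pred nat) (m : nat) : seq nat := path_rows (KN_path S m).

(* S_lambda = N_0 \ lambda, whose complement has maximum lambda_t *)
Definition S_of (l : seq nat) : pred nat := fun j => j \notin l.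
Definition KN_of (l : seq nat) : seq nat := KN (S_of l) (largest l).

(* Cells of a Young diagram given by its row lengths: (row, column), 0-based. *)
Definition cells (rows : seq nat) : seq (nat * nat) :=
  [seq (i, j) | i <- iota 0 (size rows), j <- iota 0 (nth 0 rows i)].

Definition hook (rows : seq nat) (c : nat * nat) : nat :=
  let: (i, j) := c in
  (nth 0 rows i - j.+1) + count (fun r => j < r) (drop i.+1 rows) + 1.

Definition diagonal (rows : seq nat) : seq (nat * nat) :=
  [seq c <- cells rows | c.1 == c.2].

(* Main.v *)
Require Import Defs.
From mathcomp Require Import all_boot zify.

Lemma largest_mem (s : seq nat) : s != [::] -> largest s \in s.
Proof.
rewrite /largest; elim: s => [//|a s IH] _.
rewrite big_cons; case: s IH => [|b s] IH.
  by rewrite big_nil maxn0 mem_head.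
move: (IH isT); move: (\max_(_ <- _) _) => m Hm.
case: (leqP a m) => H.
  by rewrite in_cons Hm orbT.
by rewrite mem_head.
Qed.

Lemma largest_ub (s : seq nat) x : x \in s -> x <= largest s.
Proof. by move=> Hx; rewrite /largest; apply: (leq_bigmax_seq x Hx). Qed.

Lemma size_missing (l : seq nat) :
  uniq l -> all (fun x => 0 < x) l -> size l + size (missing l) = largest l.
Proof.
move=> Hu Hp.
have Hp' : perm_eq l [seq m <- iota 1 (largest l) | m \in l].
  apply: uniq_perm => //; first by apply: filter_uniq; apply: iota_uniq.
  move=> x; rewrite mem_filter mem_iota.
  case Hx: (x \in l) => //=.
  have := @largest_ub l x Hx; have := allP Hp x Hx; simpl; lia.
rewrite (perm_size Hp') /missing !size_filter.
by rewrite (count_predC (mem l)) size_iota.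
Qed.

Lemma path_sum c (s : seq nat) :
  path ltn c s -> 2 * c * size s + size s * (size s).+1 <= 2 * sumn s.
Proof.
elim: s c => [|x s IH] c /=; first by rewrite !muln0.
case/andP => Hcx Hp.
have := IH x Hp; nia.
Qed.

Lemma sorted_sum (s : seq nat) :
  sorted ltn s -> all (fun x => 0 < x) s -> size s * (size s).+1 <= 2 * sumn s.
Proof.
case: s => [//|x s] /= Hs /andP[Hx _].
have := @path_sum 0 (x::s); rewrite /= Hx Hs /=; lia.
Qed.

Lemma sumn_map_add (T : Type) (f g : T -> nat) s :
  sumn (map f s) + sumn (map g s) = sumn (map (fun x => f x + g x) s).
Proof. elim: s => //= a s <-; lia. Qed.

Lemma sumn_map_pred (s : seq nat) :
  sumn (map (subn^~ 1) s) + count (fun r => 0 < r) s = sumn s.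
Proof. elim: s => //= a s <-; lia. Qed.

Definition D (s : seq nat) : nat :=
  sumn [seq (if i < nth 0 s i then hook s (i, i) else 0) | i <- iota 0 (size s)].

Lemma D_cons a s :
  D (a :: s) = (if 0 < a then a + count (fun r => 0 < r) s else 0)
               + D (map (subn^~ 1) s).
Proof.
rewrite /D /= size_map.
have -> : iota 1 (size s) = map (addn 1) (iota 0 (size s)) by rewrite -iotaDl.
rewrite -map_comp; congr (_ + _).
  rewrite /hook /= drop0; case: a => //= a; lia.
apply: congr1; apply/eq_in_map => i; rewrite mem_iota /= => Hi.
rewrite add0n in Hi; rewrite !add0n !add1n.
rewrite -map_drop count_map (nth_map 0); last by lia.
have -> : count (preim (subn^~ 1) (fun r => i < r)) (drop i.+1 s) =
          count (fun r => i.+1 < r) (drop i.+1 s).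
  by apply: eq_count => r /=; lia.
case: ifP; case: ifP => //; lia.
Qed.

Lemma D_sum (s : seq nat) : sorted geq s -> D s = sumn s.
Proof.
move: {2}(size s) (leqnn (size s)) => m; elim: m s => [|m IH] [|a s] //= Hm Hs.
have Hs' : sorted geq (map (subn^~ 1) s).
  apply: (homo_sorted (e := geq)); last by apply: (path_sorted Hs).
  by move=> x y /= Hxy; apply: leq_sub2r.
rewrite D_cons IH ?size_map //.
have := sumn_map_pred s.
case: a Hs => [|a] Hs /=; last by lia.
have Htr : transitive geq by move=> x y z h1 h2; exact: leq_trans h2 h1.
have Hall := order_path_min Htr Hs.
have -> : count (fun r => 0 < r) s = 0.
  apply/eqP; rewrite -leqn0 leqNgt -has_count; apply/hasPn => x Hx.
  by have := allP Hall x Hx; rewrite /= leqn0 => /eqP ->.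
lia.
Qed.

Lemma size_cells s : size (cells s) = sumn s.
Proof.
rewrite /cells size_allpairs_dep.
rewrite (eq_map (g := nth 0 s)); last by move=> i /=; rewrite size_iota.
by rewrite -/(mkseq _ _) mkseq_nth.
Qed.

Lemma diag_D s : \sum_(c <- diagonal s) hook s c = D s.
Proof.
rewrite /diagonal big_filter big_mkcond /cells big_allpairs_dep /D.
rewrite sumnE big_map.
apply: eq_bigr => i _ /=.
rewrite -big_mkcond /=.
rewrite (eq_bigl (fun j => j == i)); last by move=> j; rewrite eq_sym.
case: ifP => H.
  rewrite -big_filter filter_pred1_uniq ?iota_uniq ?mem_iota //= ?big_seq1 //.
rewrite big_hasC //; apply/hasPn => j; rewrite mem_iota /=.
by apply: contraTN => /eqP ->; rewrite H.
Qed.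

Lemma diag_sum s : sorted geq s ->
  \sum_(c <- diagonal s) hook s c = size (cells s).
Proof. by move=> Hs; rewrite diag_D D_sum // size_cells. Qed.

Lemma count_mem_cons (a : nat) t r :
  a \notin t -> count (mem (a :: t)) r = count (mem t) r + count (pred1 a) r.
Proof.
move=> Ha; elim: r => //= x r ->.
rewrite in_cons; case: (eqVneq x a) => [->|] /=; last by lia.
rewrite (negbTE Ha) /=; lia.
Qed.

Lemma sumn_map_S (T : Type) (f : T -> nat) r :
  sumn [seq f i + 1 | i <- r] = sumn (map f r) + size r.
Proof. by elim: r => //= x r ->; lia. Qed.

Lemma cnt_sum (s : seq nat) : sorted ltn s ->
  2 * sumn [seq count (mem s) (iota 0 i) | i <- s] = size s * (size s).-1.
Proof.
elim: s => [//|a s IH] Hs /=.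
have Hall := order_path_min ltn_trans Hs.
have Ha : a \notin s.
  by apply/negP => H; have := allP Hall a H; rewrite ltnn.
have Hs' : sorted ltn s := path_sorted Hs.
rewrite count_mem_cons //.
have -> : count (mem s) (iota 0 a) = 0.
  apply/eqP; rewrite -leqn0 leqNgt -has_count; apply/hasPn => x.
  rewrite mem_iota /= => Hx; apply/negP => Hxs.
  have := allP Hall x Hxs; rewrite /=; lia.
have -> : count (pred1 a) (iota 0 a) = 0.
  by rewrite -/(count_mem a _) count_uniq_mem ?iota_uniq // mem_iota ltnn andbF.
have -> : [seq count (mem (a :: s)) (iota 0 i) | i <- s] =
          [seq count (mem s) (iota 0 i) + 1 | i <- s].
  apply/eq_in_map => i Hi; rewrite count_mem_cons //.
  rewrite -/(count_mem a _) count_uniq_mem ?iota_uniq // mem_iota.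
  by have := allP Hall i Hi; rewrite /= => ->.
have -> : sumn [seq count (mem s) (iota 0 i) + 1 | i <- s] =
          sumn [seq count (mem s) (iota 0 i) | i <- s] + size s.
  by rewrite sumn_map_S.
have := IH Hs'; case: (size s) => [|m] /=; nia.
Qed.

Definition F (lam : seq nat) (i : nat) := count (fun j => j \notin lam) (iota 0 i).

Lemma KN_of_eq lam :
  KN_of lam = rev [seq F lam i | i <- [seq i <- iota 0 (largest lam).+1 | i \in lam]].
Proof.
rewrite /KN_of /KN /path_rows /KN_path size_map size_iota.
congr rev.
rewrite (@eq_in_filter _ _ (fun i => i \in lam)); last first.
  move=> i; rewrite mem_iota => /andP[_ Hi].
  rewrite (nth_map 0 false) ?size_iota // nth_iota // /S_of negbK //.
apply/eq_in_map => i; rewrite mem_filter mem_iota => /andP[_ /andP[_ Hi]].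
rewrite -map_take count_map take_iota /F.
rewrite (minn_idPl (ltnW Hi)).
by apply: eq_count => j /=; rewrite /S_of negbK.
Qed.

Lemma F_mono lam : {homo F lam : x y / x < y >-> x <= y}.
Proof.
move=> x y Hxy; rewrite /F -(subnKC (ltnW Hxy)) iotaD count_cat; lia.
Qed.

Lemma KN_sorted lam : sorted geq (KN_of lam).
Proof.
rewrite KN_of_eq rev_sorted.
apply: (homo_sorted (e := ltn)); first by apply: F_mono.
by apply: sorted_filter; [apply: ltn_trans | apply: iota_ltn_sorted].
Qed.

Lemma KN_sumn lam : sorted ltn lam -> all (fun x => 0 < x) lam ->
  sumn (KN_of lam) + sumn [seq count (mem lam) (iota 0 i) | i <- lam] = sumn lam.
Proof.
move=> Hs Hp.
have Hu : uniq lam by rewrite ltn_sorted_uniq_leq in Hs; case/andP: Hs.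
have Hperm : perm_eq [seq i <- iota 0 (largest lam).+1 | i \in lam] lam.
  apply: uniq_perm => //; first by apply: filter_uniq; apply: iota_uniq.
  move=> x; rewrite mem_filter mem_iota.
  case Hx: (x \in lam) => //=.
  have := @largest_ub lam x Hx; lia.
rewrite KN_of_eq sumn_rev (perm_sumn (perm_map _ Hperm)) sumn_map_add.
have -> : [seq F lam x + count (mem lam) (iota 0 x) | x <- lam] = lam.
  rewrite -[RHS]map_id; apply/eq_in_map => i _.
  by rewrite /F addnC -/(predC (mem lam)) count_predC size_iota.
by [].
Qed.

Lemma sumn_iota a m : 2 * sumn (iota a m) + m = m * (2 * a + m).
Proof. elim: m a => [|m IH] a //=; have := IH a.+1; nia. Qed.

Lemma T2 n : 2 * T n = n * n.+1.
Proof.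
by rewrite /T mul2n even_halfK // oddM /= negb_and orbN.
Qed.

Definition wl (n y x : nat) : seq nat :=
  sort leq (iota 1 (y - 1) ++ iota y.+1 (n - 3 - y) ++ [:: x; 2 * n - 4]).

Lemma wl_mem n y x p : 1 <= y ->
  (p \in wl n y x) = [|| (1 <= p < y), (y.+1 <= p < y.+1 + (n - 3 - y)), p == x | p == 2 * n - 4].
Proof.
move=> Hy; rewrite /wl mem_sort !mem_cat !mem_iota !inE.
have -> : 1 + (y - 1) = y by lia.
by [].
Qed.

Lemma wl_ok n k y x :
  4 <= n -> 1 <= y <= n - 2 -> n - 2 <= x < 2 * n - 4 -> y.+1 + (n - 3 - y) <= n - 1 ->
  (forall a b, 1 <= a <= 2 * n - 4 -> 1 <= b <= 2 * n - 4 ->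
     ~~ [|| (1 <= a < y), (y.+1 <= a < y.+1 + (n - 3 - y)), a == x | a == 2 * n - 4] ->
     ~~ [|| (1 <= b < y), (y.+1 <= b < y.+1 + (n - 3 - y)), b == x | b == 2 * n - 4] ->
     a != b ->
     ~~ [|| (1 <= a + b < y), (y.+1 <= a + b < y.+1 + (n - 3 - y)), a + b == x | a + b == 2 * n - 4]) ->
  sumn (wl n y x) = Td n (n - 2 * k + 1) ->
  unrefinable (Td n (n - 2 * k + 1)) (wl n y x) /\ largest (wl n y x) = 2 * n - 4.
Proof.
move=> Hn Hy Hx Hb Hunr Hsum.
have HL : largest (wl n y x) = 2 * n - 4.
  apply/eqP; rewrite eqn_leq; apply/andP; split.
    rewrite /largest; apply/bigmax_leqP_seq => p Hp _.
    move: Hp; rewrite wl_mem; last by lia.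
    lia.
  by apply: largest_ub; rewrite wl_mem ?eqxx ?orbT //; lia.
split=> //.
have Hu : uniq (wl n y x).
  rewrite /wl sort_uniq !cat_uniq !iota_uniq /=.
  rewrite !mem_iota !inE andbT.
  apply/andP; split; last by lia.
  apply/hasPn => p; rewrite !mem_cat !mem_iota !inE; lia.
rewrite /unrefinable /distinct_partition Hsum eqxx /=.
apply/andP; split; first (apply/and3P; split).
- by rewrite ltn_sorted_uniq_leq Hu sort_sorted //; apply: leq_total.
- by apply/allP => p; rewrite wl_mem; lia.
- by rewrite /wl size_sort !size_cat !size_iota /=; lia.
apply/hasPn => a; rewrite /missing HL mem_filter mem_iota => /andP[Ha1 Ha2].
apply/hasPn => b; rewrite mem_filter mem_iota => /andP[Hb1 Hb2].
have Hy1 : 1 <= y by lia.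
move: Ha1 Hb1; rewrite (@wl_mem n y x a Hy1) (@wl_mem n y x b Hy1).
move=> Ha1 Hb1; apply/negP => /andP[Hab Habl].
move: Habl; rewrite (@wl_mem n y x (a + b) Hy1).
apply/negP; apply: Hunr => //; lia.
Qed.

Lemma wl_sum n y x :
  sumn (wl n y x) = sumn (iota 1 (y - 1)) + sumn (iota y.+1 (n - 3 - y)) + x + (2 * n - 4).
Proof.
rewrite /wl.
have Hp : perm_eq (sort leq (iota 1 (y - 1) ++ iota y.+1 (n - 3 - y) ++ [:: x; 2 * n - 4]))
   (iota 1 (y - 1) ++ iota y.+1 (n - 3 - y) ++ [:: x; 2 * n - 4]) by rewrite perm_sort.
rewrite (perm_sumn Hp) !sumn_cat /=; lia.
Qed.

Lemma witness n k : 8 <= 2 * k -> 2 * k <= n - 2 ->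
  exists mu, unrefinable (Td n (n - 2 * k + 1)) mu /\ largest mu = 2 * n - 4.
Proof.
move=> Hk Hkn.
case: (eqVneq n (2 * k + 2)) => Hn.
  exists (wl n (n - 2) (n - 2)); apply: wl_ok; try lia.
  rewrite wl_sum /Td.
  have -> : n - 2 - 1 = n - 3 by lia.
  have -> : n - 3 - (n - 2) = 0 by lia.
  have [m Hm] : exists m, n = m + 3 by exists (n - 3); lia.
  rewrite Hm.
  have HT := T2 (m + 3).
  have E1 := sumn_iota 1 m.
  rewrite /= addn0.
  have -> : m + 3 - 3 = m by lia.
  have -> : m + 3 - 2 = m + 1 by lia.
  have -> : 2 * (m + 3) - 4 = 2 * m + 2 by lia.
  nia.
have [a Ha] : exists a, n = a + k + 3 by exists (n - k - 3); lia.
subst n.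
have [b Hb] : exists b, k = b + 1 by exists (k - 1); lia.
exists (wl (a + k + 3) (a + 1) (a + 2 * k + 1)).
have -> : a + 1 = a + k + 3 - k - 2 by lia.
apply: wl_ok; try lia.
rewrite wl_sum /Td.
have -> : a + k + 3 - k - 2 - 1 = a by lia.
have -> : (a + k + 3 - k - 2).+1 = a + 2 by lia.
have -> : a + k + 3 - 3 - (a + k + 3 - k - 2) = b by lia.
have -> : a + k + 3 - 2 * k + 1 = a + 4 - k by lia.
have -> : 2 * (a + k + 3) - 4 = 2 * a + 2 * k + 2 by lia.
have HT := T2 (a + k + 3).
have E1 := sumn_iota 1 a.
have E2 := sumn_iota (a + 2) b.
subst k.
nia.
Qed.

Theorem proposition5p1 (n k : nat) (lam : seq nat) :
  8 <= 2 * k -> 2 * k <= n - 2 ->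
  Ubar (Td n (n - 2 * k + 1)) lam ->
  size (cells (KN_of lam)) = 2 * n - 4 + 2 * k /\
  \sum_(c <- diagonal (KN_of lam)) hook (KN_of lam) c = 2 * n - 4 + 2 * k.
Proof.
move=> Hk Hkn [[Hunref Hmax] Hsz].
suff Hc : size (cells (KN_of lam)) = 2 * n - 4 + 2 * k.
  by split => //; rewrite diag_sum // KN_sorted.
move: Hunref; rewrite /unrefinable /distinct_partition => /andP[/and4P[Hs Hp /eqP Hsum Hsize] _].
have Hu : uniq lam by rewrite ltn_sorted_uniq_leq in Hs; case/andP: Hs.
have [mu [Hmu HLmu]] := @witness n k Hk Hkn.
have HL1 := Hmax mu Hmu; rewrite HLmu in HL1.
have Hsm := @size_missing lam Hu Hp; rewrite Hsz in Hsm.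
have Hne : lam != [::] by case: (lam) Hsize.
have HLin := @largest_mem lam Hne.
set L := largest lam in HL1 Hsm HLin Hsz.
have Hperm := perm_to_rem HLin.
have Hsum' : sumn lam = L + sumn (rem L lam) by rewrite (perm_sumn Hperm).
have Hsz' : size (rem L lam) = (size lam).-1 by rewrite size_rem.
have Hs' : sorted ltn (rem L lam) := subseq_sorted ltn_trans (rem_subseq _ _) Hs.
have Hp' : all (fun x => 0 < x) (rem L lam).
  by apply/allP => x Hx; apply: (allP Hp); apply: (mem_rem Hx).
have Hlow := @sorted_sum (rem L lam) Hs' Hp'.
rewrite Hsz' in Hlow.
have HT := T2 n.
have Hodd := odd_double_half L.
have HL2 : L <= 2 * n - 4.
  rewrite leqNgt; apply/negP => HL.
  set t := size lam in Hsm Hlow Hsz' .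
  have Ht : n - 1 <= t by move: Hodd; rewrite -muln2; case: (odd L) => /=; lia.
  have Hm : (n - 2) * (n - 1) <= (t.-1) * t.
    by apply: leq_mul; lia.
  move: Hsum Hlow Hm; rewrite /Td Hsum'; nia.
have HLe : L = 2 * n - 4 by lia.
have Ht : size lam = n - 2.
  move: Hodd; rewrite HLe -muln2; case: (odd (2 * n - 4)) => /=; lia.
rewrite size_cells.
have HK := @KN_sumn lam Hs Hp.
have HC := @cnt_sum lam Hs.
rewrite Ht in HC.
move: HK HC Hsum; rewrite /Td.
have [m Hm] : exists m, n = m + 10 by exists (n - 10); lia.
subst n.
have -> : (m + 10 - 2).-1 = m + 7 by lia.
have -> : m + 10 - 2 = m + 8 by lia.
have -> : m + 10 - 2 * k + 1 = m + 11 - 2 * k by lia.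
nia.
Qed.
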